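(* Let $a,b,c,d$ be positive integers. Then for every positive integer $t$, $$i((a,b,c,d),t)=i((d,c,b,a),t)=\sum_{j=0}^{t\min\{a,d\}}F(a,b,j,t)\,F(c,d,-j,t).$$
   Context: For $S,T\subseteq[n]$, write $T\le S$ if $|T|=|S|$ and the $i$-th smallest element of $T$ is at most the $i$-th smallest element of $S$ for each $i$. The Schubert matroid $\mathrm{SM}_n(S)$ is the matroid on $[n]$ with bases $\{T\subseteq[n]:T\le S\}$; $i(M,t)$ is the number of lattice points in the $t$-th dilate of the matroid polytope $\mathrm{conv}\{\sum_{b\in B}e_b: B\text{ a basis of }M\}$. For a sequence $r=(r_1,\dots,r_{2m})$ of integers with $r_1\ge0$, $r_i>0$ for $i\ge2$, let $n=\sum r_i$ and let $S\subseteq[n]$ have indicator vector $(0^{r_1},1^{r_2},\dots,0^{r_{2m-1}},1^{r_{2m}})$ ($x^p$ = $p$ consecutive copies of $x$); $i(r,t):=i(\mathrm{SM}_n(S),t)$. For integers $a,b\ge0$ with $a+b\ge1$, $c\in\mathbb Z$, $t\ge0$: $F(a,b,c,t)=\sum_{j=0}^{a+b}(-1)^j\binom{a+b}{j}\binom{(t+1)(b-j)+a+c-1}{a+b-1}$, with $\binom00=1$ and $\binom NK=0$ if $K<0$ or $N<K$. *)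

(* Defs.v *)
From HB Require Import structures.
From mathcomp Require Import all_boot all_order all_algebra.
From mathcomp Require Import boolp reals.
Set Implicit Arguments. Unset Strict Implicit. Unset Printing Implicit Defensive.
Import Order.TTheory GRing.Theory Num.Theory.
Local Open Scope ring_scope.

Definition sorted_elems (n : nat) (T : {set 'I_n}) : seq nat :=
  sort leq [seq val x | x <- enum T].

Definition gale_le (n : nat) (T S : {set 'I_n}) : bool :=
  (#|T| == #|S|)%N &&
  [forall i : 'I_#|S|, (nth 0%N (sorted_elems T) i <= nth 0%N (sorted_elems S) i)%N].

Definition schubert_basis (n : nat) (S B : {set 'I_n}) : bool := gale_le B S.

Definition in_dilated_schubert_polytope (R : realType) (n : nat)
    (S : {set 'I_n}) (t : nat) (x : 'I_n -> int) : Prop :=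
  exists lam : {set 'I_n} -> R,
    (forall B, schubert_basis S B -> 0 <= lam B)%R /\
    (\sum_(B | schubert_basis S B) lam B = 1)%R /\
    (forall k : 'I_n,
       ((x k)%:~R = t%:R * \sum_(B | schubert_basis S B) lam B * (k \in B)%:R)%R).

(* Every such
   point has coordinates in {0,...,t} (it is t times a convex combination of
   0/1-vectors), so we count over the box {0,...,t}^n. *)
Definition i_schubert (R : realType) (n : nat) (S : {set 'I_n}) (t : nat) : nat :=
  #|[set x : {ffun 'I_n -> 'I_t.+1} |
      `[< in_dilated_schubert_polytope R S t (fun k => Posz (val (x k))) >] ]|.

(* Indicator vector (0^{r_1}, 1^{r_2}, 0^{r_3}, ...) of the sequence r. *)
Definition indicator_of (r : seq nat) : seq bool :=
  flatten [seq nseq (nth 0%N r i) (odd i) | i <- iota 0 (size r)].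

Definition set_of_seq (r : seq nat) : {set 'I_(sumn r)} :=
  [set k : 'I_(sumn r) | nth false (indicator_of r) k].

Definition i_seq (R : realType) (r : seq nat) (t : nat) : nat :=
  i_schubert R (set_of_seq r) t.

Definition binz (N : int) (K : nat) : int :=
  if (N < K%:Z)%R then 0%R else ('C(`|N|%N, K))%:Z.

Definition Ffun (a b : nat) (c : int) (t : nat) : int :=
  (\sum_(0 <= j < (a + b).+1)
     (-1) ^+ j * ('C(a + b, j))%:Z *
     binz ((t.+1)%:Z * (b%:Z - j%:Z) + a%:Z + c - 1) (a + b).-1)%R.

(* Main.v *)
Require Import Defs.
From HB Require Import structures.
From mathcomp Require Import all_boot all_order all_algebra.
From mathcomp Require Import boolp reals.
From mathcomp Require Import zify ring.
Set Implicit Arguments. Unset Strict Implicit. Unset Printing Implicit Defensive.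
Import Order.TTheory GRing.Theory Num.Theory.

Lemma count_all_ge (l : seq nat) x m : (m <= x)%N -> all (leq x) l ->
  count (fun y => y < m)%N l = 0%N.
Proof.
move=> Hx /allP Hall; apply/eqP; rewrite -leqn0 leqNgt -has_count; apply/hasPn => y Hy.
by rewrite -leqNgt (leq_trans Hx) // Hall.
Qed.

Lemma sorted_nth_count (l : seq nat) (q m : nat) :
  sorted leq l -> (q < size l)%N ->
  (nth 0%N l q < m)%N = (q < count (fun y => y < m)%N l)%N.
Proof.
elim: l q => [|x l IH] q //= Hs Hq.
have Hl : sorted leq l by apply: (path_sorted Hs).
have Hall : all (leq x) l.
  by apply: order_path_min => //; exact: leq_trans.
case: q Hq => [|q] Hq /=.
  case: (ltnP x m) => Hx //=.
  by rewrite add0n (count_all_ge Hx Hall).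
rewrite IH //; case: (ltnP x m) => Hx //=.
by rewrite add0n (count_all_ge Hx Hall).
Qed.

Definition pre (n : nat) (F : 'I_n -> nat) (m : nat) : nat :=
  (\sum_(k : 'I_n | (k < m)%N) F k)%N.
Definition cB (n : nat) (B : {set 'I_n}) m := pre (fun k => nat_of_bool (k \in B)) m.

Lemma sorted_elems_sorted n (B : {set 'I_n}) : sorted leq (sorted_elems B).
Proof. exact: (sort_sorted leq_total). Qed.

Lemma size_sorted_elems n (B : {set 'I_n}) : size (sorted_elems B) = #|B|.
Proof. by rewrite /sorted_elems size_sort size_map cardE. Qed.

Lemma count_sorted_elems n (B : {set 'I_n}) m :
  count (fun y => y < m)%N (sorted_elems B) = cB B m.
Proof.
rewrite /sorted_elems (permP (permEl (perm_sort _ _))) count_map.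
rewrite -sum1_count big_enum_cond /cB /pre big_mkcond [RHS]big_mkcond /=.
by apply: eq_bigr => k _; case: (k \in B); case: (k < m)%N.
Qed.

Lemma cB_ge n (B : {set 'I_n}) m : (n <= m)%N -> cB B m = #|B|.
Proof.
move=> Hm; rewrite /cB /pre -sum1_card big_mkcond /= [RHS]big_mkcond /=.
by apply: eq_bigr => k _; rewrite (leq_trans (ltn_ord k) Hm); case: (k \in B).
Qed.

Lemma gale_leP n (B S : {set 'I_n}) :
  gale_le B S <-> (#|B| = #|S| /\ forall m, (cB S m <= cB B m)%N).
Proof.
have HsB := sorted_elems_sorted B; have HsS := sorted_elems_sorted S.
split.
  case/andP => /eqP HBS /forallP Hi; split => // m.
  case E: (cB S m) => [|c] //.
  have Hc : (c < count (fun y => y < m)%N (sorted_elems S))%N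
    by rewrite count_sorted_elems E.
  have HcS : (c < #|S|)%N.
    by rewrite -size_sorted_elems (leq_trans Hc) // count_size.
  have H1 := Hi (Ordinal HcS); rewrite /= in H1.
  rewrite -(sorted_nth_count _ HsS) ?size_sorted_elems // in Hc.
  have : (nth 0%N (sorted_elems B) c < m)%N by apply: leq_ltn_trans H1 Hc.
  by rewrite (sorted_nth_count _ HsB) ?size_sorted_elems ?HBS // count_sorted_elems.
case=> HBS Hm; apply/andP; split; first by rewrite HBS.
apply/forallP => i.
have HiS : (i < size (sorted_elems S))%N by rewrite size_sorted_elems.
have HiB : (i < size (sorted_elems B))%N by rewrite size_sorted_elems HBS.
have := Hm (nth 0%N (sorted_elems S) i).+1.
rewrite -!count_sorted_elems => Hc.
have : (i < count (fun y => y < (nth 0%N (sorted_elems S) i).+1)%N (sorted_elems S))%N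
  by rewrite -sorted_nth_count.
move=> /leq_trans /(_ Hc); rewrite -sorted_nth_count //.
Qed.

Section Pre.
Variables (n : nat) (F : 'I_n -> nat).

Lemma pre_S m : pre F m.+1 = (pre F m + \sum_(k : 'I_n | val k == m) F k)%N.
Proof.
rewrite /pre (bigID (fun k : 'I_n => (k < m)%N)) /=; congr (_ + _)%N.
  apply: eq_bigl => k; rewrite ltnS; case: ltngtP => //.
apply: eq_bigl => k; rewrite ltnS; case: ltngtP => //.
Qed.

Lemma pre_S_ord (k : 'I_n) : pre F k.+1 = (pre F k + F k)%N.
Proof.
rewrite pre_S (@big_pred1 _ _ _ _ k) //.
Qed.

Lemma pre_S_ge m : (n <= m)%N -> pre F m.+1 = pre F m.
Proof.
move=> Hm; rewrite pre_S big_pred0 ?addn0 // => k.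
by apply/negbTE; rewrite neq_ltn (leq_trans (ltn_ord k) Hm).
Qed.

Lemma pre_ge m : (n <= m)%N -> pre F m = (\sum_k F k)%N.
Proof.
move=> Hm; rewrite /pre; apply: eq_bigl => k.
by rewrite (leq_trans (ltn_ord k) Hm).
Qed.

Lemma pre0 : pre F 0 = 0%N.
Proof. by rewrite /pre big_pred0. Qed.

Lemma pre_S_cases m : pre F m.+1 = pre F m \/
   exists k : 'I_n, val k = m /\ pre F m.+1 = (pre F m + F k)%N.
Proof.
case: (ltnP m n) => Hm.
  by right; exists (Ordinal Hm); split => //; rewrite (pre_S_ord (Ordinal Hm)).
by left; rewrite pre_S_ge.
Qed.

Lemma pre_mono m m' : (m <= m')%N -> (pre F m <= pre F m')%N.
Proof.
move/subnK <-; elim: (m' - m)%N => [|i IH] //.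
rewrite addSn; case: (pre_S_cases (i + m)) => [->|[k [_ ->]]] //.
by rewrite (leq_trans IH) // leq_addr.
Qed.

Lemma pre_lip (t : nat) m m' : (forall k, F k <= t)%N -> (m <= m')%N ->
  (pre F m' <= pre F m + t * (m' - m))%N.
Proof.
move=> Ht /subnK <-; rewrite addnK; elim: (m' - m)%N => [|i IH].
  by rewrite muln0 addn0.
rewrite addSn; case: (pre_S_cases (i + m)) => [->|[k [_ ->]]].
  by rewrite (leq_trans IH) // leq_add2l leq_mul2l ltnW ?orbT.
have := Ht k; rewrite mulnS; lia.
Qed.
End Pre.

Section CharA.
Local Open Scope ring_scope.
Variables (R : realType) (n t : nat) (S : {set 'I_n}) (f : 'I_n -> nat).

Lemma intr_nat (m : nat) : ((Posz m)%:~R : R) = m%:R.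
Proof. by rewrite -pmulrn. Qed.

Lemma pre_real (lam : {set 'I_n} -> R) m :
  (forall k : 'I_n,
       ((Posz (f k))%:~R = t%:R * \sum_(B | schubert_basis S B) lam B * (k \in B)%:R)) ->
  ((pre f m)%:R : R) = t%:R * \sum_(B | schubert_basis S B) lam B * (cB B m)%:R.
Proof.
move=> H; rewrite /pre natr_sum.
under eq_bigr => k _ do rewrite -intr_nat H.
rewrite -mulr_sumr; congr (_ * _); rewrite exchange_big /=.
apply: eq_bigr => B _; rewrite -mulr_sumr /cB /pre natr_sum //.
Qed.

Lemma charA : in_dilated_schubert_polytope R S t (fun k => Posz (f k)) ->
  pre f n = (t * #|S|)%N /\ forall m, (t * cB S m <= pre f m)%N.
Proof.
case=> lam [H0 [H1 H2]].
have key m := pre_real m H2.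
split.
  apply/eqP; rewrite -(eqr_nat R) key natrM; apply/eqP; congr (_ * _).
  have -> : (#|S|)%:R = \sum_(B | schubert_basis S B) lam B * (#|S|)%:R :> R
    by rewrite -mulr_suml H1 mul1r.
  apply: eq_bigr => B HB.
  rewrite cB_ge //; case/gale_leP: HB => -> _ //.
move=> m; rewrite -(ler_nat R) key natrM ler_wpM2l //.
have -> : (cB S m)%:R = \sum_(B | schubert_basis S B) lam B * (cB S m)%:R :> R
  by rewrite -mulr_suml H1 mul1r.
apply: ler_sum => B HB.
rewrite ler_wpM2l ?H0 // ler_nat.
by case/gale_leP: HB => _ ->.
Qed.
End CharA.

Section Mod.
Variable t : nat.
Hypothesis Ht : (0 < t)%N.

Definition cnt N i := count (fun p => p %% t == i)%N (iota 0 N).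

Lemma count_period s i : (i < t)%N -> count (fun p => p %% t == i)%N (iota s t) = 1%N.
Proof.
move=> Hi; elim: s => [|s IH].
  rewrite (@eq_in_count _ _ (pred1 i)); last first.
    by move=> p; rewrite mem_iota add0n => /andP [_ Hp] /=; rewrite modn_small.
  by rewrite (count_uniq_mem _ (iota_uniq 0 t)) mem_iota Hi.
case: t Ht Hi IH => [|t'] // _ Hi.
have -> : iota s.+1 t'.+1 = iota s.+1 t' ++ [:: s.+1 + t']%N by rewrite -(iotaD s.+1 t' 1) addn1.
rewrite count_cat /= => <-.
by rewrite addn0 addSn -addnS modnDr addnC.
Qed.

Lemma count_short s len i : (i < t)%N -> (len <= t)%N ->
  (count (fun p => p %% t == i)%N (iota s len) <= 1)%N.
Proof.
move=> Hi Hl; rewrite -(count_period s Hi) -(subnKC Hl) iotaD count_cat.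
exact: leq_addr.
Qed.

Lemma cnt_add N M i : cnt (N + M) i = (cnt N i + count (fun p => p %% t == i)%N (iota N M))%N.
Proof. by rewrite /cnt iotaD count_cat. Qed.

Lemma cnt_mul c i : (i < t)%N -> cnt (t * c) i = c.
Proof.
move=> Hi; elim: c => [|c IH]; first by rewrite muln0.
by rewrite mulnS addnC cnt_add IH count_period // addn1.
Qed.

Lemma cnt_mono N M i : (N <= M)%N -> (cnt N i <= cnt M i)%N.
Proof. by move/subnKC <-; rewrite cnt_add leq_addr. Qed.

Lemma sum_count_mod (l : seq nat) :
  (\sum_(i < t) count (fun p => p %% t == i)%N l)%N = size l.
Proof.
elim: l => [|p l IH] /=; first by rewrite big1.
rewrite big_split /= IH -[RHS]add1n; congr (_ + _)%N.
rewrite (bigD1 (Ordinal (ltn_pmod p Ht))) //= eqxx big1 // => j Hj.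
by rewrite eq_sym; move: Hj; rewrite -val_eqE /= => /negbTE ->.
Qed.
End Mod.

Section CharB.
Variables (n t : nat) (S : {set 'I_n}) (f : 'I_n -> nat).
Hypothesis Ht : (0 < t)%N.
Hypothesis Hf : forall k, (f k <= t)%N.
Hypothesis Hsum : pre f n = (t * #|S|)%N.
Hypothesis Hpre : forall m, (t * cB S m <= pre f m)%N.

Definition Bi (i : nat) : {set 'I_n} :=
  [set k : 'I_n | has (fun p => p %% t == i)%N (iota (pre f k) (f k))].

Lemma mem_Bi k i : (i < t)%N ->
  nat_of_bool (k \in Bi i) = count (fun p => p %% t == i)%N (iota (pre f k) (f k)).
Proof.
move=> Hi; rewrite inE has_count.
have := count_short Ht (pre f k) Hi (Hf k).
by case: count => [|[|]].
Qed.

Lemma cB_Bi m i : (i < t)%N -> cB (Bi i) m = cnt t (pre f m) i.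
Proof.
move=> Hi; elim: m => [|m IH]; first by rewrite /cB !pre0.
case: (ltnP m n) => Hm.
  have -> : m = Ordinal Hm by [].
  by rewrite /cB !pre_S_ord -/(cB _ _) IH cnt_add mem_Bi.
by rewrite /cB !pre_S_ge.
Qed.

Lemma Bi_basis i : (i < t)%N -> schubert_basis S (Bi i).
Proof.
move=> Hi; apply/gale_leP; split.
  by rewrite -(cB_ge (Bi i) (leqnn n)) cB_Bi // Hsum cnt_mul.
move=> m; rewrite cB_Bi // -{1}(cnt_mul Ht (cB S m) Hi).
exact: cnt_mono.
Qed.

Lemma sum_Bi k : (\sum_(i < t) nat_of_bool (k \in Bi i))%N = f k.
Proof.
rewrite -[RHS](size_iota (pre f k)) -(sum_count_mod Ht).
by apply: eq_bigr => i _; rewrite mem_Bi.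
Qed.
End CharB.

Section CharB2.
Local Open Scope ring_scope.
Variables (R : realType) (n t : nat) (S : {set 'I_n}) (f : 'I_n -> nat).
Hypothesis Ht : (0 < t)%N.
Hypothesis Hf : forall k, (f k <= t)%N.
Hypothesis Hsum : pre f n = (t * #|S|)%N.
Hypothesis Hpre : forall m, (t * cB S m <= pre f m)%N.

Lemma sum_pred_eq (P : pred {set 'I_n}) (C : {set 'I_n}) (G : {set 'I_n} -> R) :
  P C -> \sum_(B | P B) (B == C)%:R * G B = G C.
Proof.
move=> HC; rewrite (bigD1 C) //= eqxx mul1r big1 ?addr0 // => B /andP [_ /negbTE ->].
by rewrite mul0r.
Qed.

Lemma charB : in_dilated_schubert_polytope R S t (fun k => Posz (f k)).
Proof.
have Htr : (t%:R : R) != 0 by rewrite pnatr_eq0 -lt0n.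
exists (fun B => (t%:R)^-1 * \sum_(i < t) (B == Bi t f i)%:R); split; [|split].
- move=> B _; rewrite mulr_ge0 ?invr_ge0 ?ler0n // sumr_ge0 // => i _.
- rewrite -mulr_sumr exchange_big /=.
  rewrite (eq_bigr (fun _ => 1)); last first.
    move=> i _; have := sum_pred_eq (fun _ => 1) (Bi_basis Ht Hf Hsum Hpre (ltn_ord i)).
    by move=> H; rewrite -[RHS]H; apply: eq_bigr => B _; rewrite mulr1.
  by rewrite sumr_const card_ord -[_ *+ _]mulr_natr mul1r mulVf.
- move=> k; rewrite intr_nat.
  under eq_bigr do rewrite -mulrA.
  rewrite -mulr_sumr mulrA mulfV // mul1r.
  under eq_bigr do rewrite mulr_suml.
  rewrite exchange_big /=.
  rewrite (eq_bigr (fun i : 'I_t => (k \in Bi t f i)%:R)); last first.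
    move=> i _; exact: (sum_pred_eq (fun B => (k \in B)%:R) (Bi_basis Ht Hf Hsum Hpre (ltn_ord i))).
  by rewrite -natr_sum (sum_Bi Ht Hf).
Qed.
End CharB2.

Lemma nth_indicator (a b c d k : nat) : (k < a + b + c + d)%N ->
  nth false (indicator_of [:: a; b; c; d]) k =
  ((a <= k < a + b) || (a + b + c <= k))%N.
Proof.
move=> Hk; rewrite /indicator_of /= cats0.
rewrite !nth_cat !size_nseq !nth_nseq.
by repeat case: ifP => ? ; lia.
Qed.

Section Spec.
Variables (a b c d n t : nat) (S : {set 'I_n}).
Hypothesis Hn : n = (a + b + c + d)%N.
Hypothesis HS : forall k : 'I_n, (k \in S) = ((a <= k < a + b) || (a + b + c <= k))%N.

Lemma cB_spec m : cB S m = (minn m (a + b) - a + (minn m n - (a + b + c)))%N.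
Proof.
elim: m => [|m IH]; first by rewrite /cB pre0 !min0n.
case: (ltnP m n) => Hm.
  have -> : m = Ordinal Hm by [].
  rewrite /cB pre_S_ord -/(cB _ _) IH HS /=.
  simpl; lia.
rewrite /cB pre_S_ge // -/(cB _ _) IH; lia.
Qed.

Lemma card_spec : #|S| = (b + d)%N.
Proof. by rewrite -(cB_ge S (leqnn n)) cB_spec; lia. Qed.

Lemma cond_spec (t' : nat) (f : 'I_n -> nat) : (forall k, f k <= t')%N ->
  (pre f n = (t' * #|S|)%N /\ forall m, (t' * cB S m <= pre f m)%N) <->
  ((t' * b <= pre f (a + b))%N /\ pre f n = (t' * (b + d))%N).
Proof.
move=> Hf; rewrite card_spec; split.
  case=> H1 H2; split => //.
  have := H2 (a + b)%N; rewrite cB_spec.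
  have -> : (minn (a + b) (a + b) - a + (minn (a + b) n - (a + b + c)) = b)%N by lia.
  by [].
case=> H1 H2; split => // m.
rewrite cB_spec.
case: (boolP (m <= a)%N) => Ha.
  have -> : (minn m (a + b) - a + (minn m n - (a + b + c)) = 0)%N by lia.
  by rewrite muln0.
case: (boolP (m <= a + b)%N) => Hab.
  have := pre_lip Hf Hab.
  have -> : (minn m (a + b) - a + (minn m n - (a + b + c)) = m - a)%N by lia.
  move=> H; nia.
case: (boolP (m <= a + b + c)%N) => Habc.
  have : (a + b <= m)%N by lia.
  move=> /(pre_mono f).
  have -> : (minn m (a + b) - a + (minn m n - (a + b + c)) = b)%N by lia.
  lia.
case: (boolP (m <= n)%N) => Hmn.
  have := pre_lip Hf Hmn.
  have -> : (minn m (a + b) - a + (minn m n - (a + b + c)) = b + (m - (a + b + c)))%N by lia.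
  move=> H; nia.
have Hmn' : (n <= m)%N by lia.
rewrite (pre_ge f Hmn') -(pre_ge f (leqnn n)) H2.
have -> : (minn m (a + b) - a + (minn m n - (a + b + c)) = b + d)%N by lia.
by [].
Qed.
End Spec.

Section Part2.
Local Open Scope ring_scope.


Lemma binz_nat (m k : nat) : binz (Posz m) k = ('C(m, k))%:Z.
Proof.
rewrite /binz ltz_nat; case: ltnP => H //.
by rewrite bin_small.
Qed.

Lemma binz_neg (z : int) k : z < 0 -> binz z k = 0.
Proof.
move=> H; rewrite /binz ifT //; apply: lt_le_trans H _; by [].
Qed.

Lemma binz_pascal (z : int) (k : nat) : binz (z + 1) k.+1 = binz z k.+1 + binz z k.
Proof.
case: z => [m|[|m]].
- by rewrite -PoszD !binz_nat addn1 binS PoszD addrC.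
- have -> : Negz 0 + 1 = Posz 0 by [].
  by rewrite binz_nat !binz_neg.
- rewrite !binz_neg // NegzE.
Qed.

Lemma binz_tele (K : int) (k t : nat) :
  \sum_(v < t.+1) binz (K - v%:Z) k = binz (K + 1) k.+1 - binz (K - t%:Z) k.+1.
Proof.
elim: t => [|t IH].
  by rewrite big_ord1 /= subr0 binz_pascal addrC addKr.
rewrite big_ord_recr /= IH.
have E : K - t%:Z = (K - t.+1%:Z) + 1 by lia.
rewrite E (binz_pascal (K - t.+1%:Z)); ring.
Qed.

Section HF.
Variable t : nat.

Definition HF (m : nat) (N : int) : int :=
  \sum_(0 <= j < m.+1) (-1) ^+ j * ('C(m, j))%:Z *
     binz (N - (t.+1)%:Z * j%:Z + m%:Z - 1) m.-1.

Lemma HF_rec (k : nat) (N : int) :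
  \sum_(v < t.+1) HF k.+1 (N - v%:Z) = HF k.+2 N.
Proof.
pose T (j : nat) := binz (N - (t.+1)%:Z * j%:Z + k.+1%:Z) k.+1.
pose c (j : nat) : int := (-1) ^+ j * ('C(k.+1, j))%:Z.
have L : \sum_(v < t.+1) HF k.+1 (N - v%:Z) =
    \sum_(0 <= j < k.+2) c j * (T j - T j.+1).
  rewrite /HF exchange_big /=; apply: eq_bigr => j _.
  rewrite -mulr_sumr /c; congr (_ * _).
  have -> : \sum_(v < t.+1) binz (N - v%:Z - (t.+1)%:Z * j%:Z + k.+1%:Z - 1) k.+1.-1
      = \sum_(v < t.+1) binz ((N - (t.+1)%:Z * j%:Z + k%:Z) - v%:Z) k.
    apply: eq_bigr => v _; congr binz; rewrite -[k.+1]addn1 PoszD; ring.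
  rewrite binz_tele /T; congr (binz _ _ - binz _ _).
    by rewrite -[k.+1]addn1 PoszD; ring.
  by rewrite -[j.+1]addn1 -[t.+1]addn1 -[k.+1]addn1 !PoszD; ring.
rewrite L.
have R : HF k.+2 N = \sum_(0 <= j < k.+3) (-1) ^+ j * ('C(k.+2, j))%:Z * T j.
  rewrite /HF; apply: eq_bigr => j _; congr (_ * binz _ _).
  by rewrite /T -[k.+2]addn1 -[k.+1]addn1 !PoszD; ring.
rewrite R [RHS]big_nat_recl //.
have ER : \sum_(0 <= i < k.+2) (-1) ^+ i.+1 * ('C(k.+2, i.+1))%:Z * T i.+1
   = \sum_(0 <= i < k.+2) (c i.+1 * T i.+1 - c i * T i.+1).
  apply: eq_bigr => i _; rewrite /c binS PoszD exprS; ring.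
rewrite ER.
rewrite sumrB addrA.
have E1 : (-1) ^+ 0 * ('C(k.+2, 0))%:Z * T 0 + \sum_(0 <= i < k.+2) c i.+1 * T i.+1
     = \sum_(0 <= j < k.+2) c j * T j.
  rewrite -(big_nat_recl (k.+2) 0 (fun j => c j * T j) (leq0n _)) /=.
  rewrite big_nat_recr //= /c bin_small // mulr0 mul0r addr0.
  by [].
rewrite E1 -sumrB; apply: eq_bigr => j _; ring.
Qed.
End HF.

Section GZ.
Variable t : nat.
Definition Apol : {poly int} := \sum_(v < t.+1) 'X^v.
Definition Gz (m : nat) (N : int) : int :=
  match N with Posz n => (Apol ^+ m)`_n | Negz _ => 0 end.

Lemma Gz_neg m (z : int) : z < 0 -> Gz m z = 0.
Proof. by case: z. Qed.

Lemma Gz_sub m (n v : nat) : (v <= n)%N -> Gz m (n%:Z - v%:Z) = (Apol ^+ m)`_(n - v).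
Proof. by move=> H; rewrite subzn. Qed.

Lemma coefA j : Apol`_j = (j < t.+1)%:R.
Proof.
rewrite /Apol coef_sum.
under eq_bigr do rewrite coefXn.
case: (ltnP j t.+1) => H.
  rewrite (bigD1 (Ordinal H)) //= eqxx big1 ?addr0 // => i Hi.
  by rewrite eq_sym; move: Hi; rewrite -val_eqE /= => /negbTE ->.
rewrite big1 // => i _; case: eqP => // E.
by move: (ltn_ord i); rewrite -E ltnNge H.
Qed.

Lemma Gz_rec m (N : int) : Gz m.+1 N = \sum_(v < t.+1) Gz m (N - v%:Z).
Proof.
case: N => [n|n]; last first.
  rewrite big1 // => v _; apply: Gz_neg; rewrite NegzE; lia.
rewrite /= exprSr coefMr.
rewrite (eq_bigr (fun j : 'I_n.+1 => (Apol ^+ m)`_(n - j) * (j < t.+1)%:R)); last first.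
  by move=> j _; congr (_ * _); apply: coefA.
rewrite (big_ord_widen (n + t).+1 (fun j => (Apol ^+ m)`_(n - j) * (j < t.+1)%:R)); last by lia.
rewrite (big_ord_widen (n + t).+1 (fun j => Gz m (n%:Z - j%:Z))); last by lia.
rewrite big_mkcond [RHS]big_mkcond /=; apply: eq_bigr => j _.
case: (ltnP j n.+1) => H1; case: (ltnP j t.+1) => H2 /=.
- by rewrite mulr1 Gz_sub.
- by rewrite mulr0.
- by rewrite Gz_neg //; lia.
- by [].
Qed.

Lemma binz0 (z : int) : binz z 0 = (0 <= z)%R%:R.
Proof.
case: z => [m|m]; first by rewrite binz_nat bin0.
by rewrite binz_neg.
Qed.

Lemma Gz_HF k (N : int) : Gz k.+1 N = HF t k.+1 N.
Proof.
elim: k N => [|k IH] N; last first.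
  by rewrite Gz_rec -HF_rec; apply: eq_bigr => v _; rewrite IH.
rewrite /HF big_nat_recr //= big_nat_recr //= big_geq // add0r.
rewrite !binz0.
have -> : N - (t.+1)%:Z * 0%:Z + 1%:Z - 1 = N by ring.
have -> : N - (t.+1)%:Z * 1%:Z + 1%:Z - 1 = N - (t.+1)%:Z by ring.
rewrite expr0 expr1 !bin0 bin1 mul1r mulN1r mul1r.
case: N => [n|n]; last first.
  have F1 : (0 <= Negz n - (t.+1)%:Z) = false.
    by apply/negbTE; rewrite -ltNge NegzE; lia.
  have F2 : (0 <= Negz n) = false by [].
  by rewrite F1 F2 /= subrr.
rewrite /= expr1 coefA subr_ge0 lez_nat.
by case: (ltnP n t.+1) => H /=; rewrite ?subr0 ?subrr.
Qed.

Lemma Gz_sym m (N : int) : Gz m N = Gz m ((t * m)%:Z - N).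
Proof.
elim: m N => [|m IH] N.
  rewrite muln0 sub0r.
  case: N => [[|n]|n] //=; rewrite ?expr0 ?coef1 //.
rewrite Gz_rec Gz_rec (reindex_inj rev_ord_inj) /=; apply: eq_bigr => v _.
rewrite IH; congr (Gz m _).
rewrite subnS -subn1 -subzn; last by have := ltn_ord v; lia.
rewrite -subzn; last exact: ltnW.
  by rewrite mulnS; lia.
Qed.
End GZ.

Lemma Ffun_HF a b (c : int) t : Ffun a b c t = HF t (a + b) ((t * b)%:Z + c).
Proof.
rewrite /Ffun /HF; apply: eq_bigr => j _; congr (_ * binz _ _).
rewrite -[t.+1]addn1 !PoszD PoszM; ring.
Qed.

Section Gen.
Variables (t p q : nat).
Definition s1 (x : {ffun 'I_(p + q) -> 'I_t.+1}) := (\sum_(i < p) val (x (lshift q i)))%N.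
Definition s2 (x : {ffun 'I_(p + q) -> 'I_t.+1}) := (\sum_(i < q) val (x (rshift p i)))%N.

Lemma genfun (N1 N2 : nat) :
  \sum_(x : {ffun 'I_(p + q) -> 'I_t.+1}) ((s1 x == N1) && (s2 x == N2))%:R
  = Gz t p N1 * Gz t q N2.
Proof.
pose F (k : 'I_(p + q)) (v : 'I_t.+1) : {poly {poly int}} :=
  if (k < p)%N then ('X^v)%:P else 'X^v.
have H1 : \prod_k \sum_v F k v =
    \sum_(x : {ffun 'I_(p + q) -> 'I_t.+1}) \prod_k F k (x k) := bigA_distr_bigA F.
have H2 : forall x : {ffun 'I_(p + q) -> 'I_t.+1},
    \prod_k F k (x k) = ('X^(s1 x))%:P * 'X^(s2 x).
  move=> x; rewrite big_split_ord /F /=; congr (_ * _).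
    rewrite (eq_bigr (fun i => ('X^(x (lshift q i)))%:P)); last first.
      by move=> i _; rewrite /= ltn_ord.
    by rewrite -rmorph_prod prodrXr.
  rewrite (eq_bigr (fun i => 'X^(x (rshift p i)))); last first.
    by move=> i _; rewrite /= ltnNge leq_addr.
  by rewrite prodrXr.
have H3 : \prod_k \sum_v F k v = (Apol t ^+ p)%:P * (map_poly polyC (Apol t)) ^+ q.
  rewrite big_split_ord /F /=; congr (_ * _).
    rewrite (eq_bigr (fun i => (Apol t)%:P)); last first.
      by move=> i _; rewrite /= ltn_ord /Apol rmorph_sum.
    by rewrite prodr_const card_ord polyC_exp.
  rewrite (eq_bigr (fun i => map_poly polyC (Apol t))); last first.
    move=> i _; rewrite /= ltnNge leq_addr /= /Apol rmorph_sum.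
    by apply: eq_bigr => v _; symmetry; apply: map_polyXn.
  by rewrite prodr_const card_ord.
have := congr1 (fun P : {poly {poly int}} => P`_N2`_N1) H1.
rewrite H3 -rmorphXn coefCM coef_map /= coefMC => ->.
rewrite !coef_sum; apply: eq_bigr => x _.
rewrite H2 coefCM coefXn mulr_natr coefMn coefXn.
rewrite [N1 == _]eq_sym [N2 == _]eq_sym.
by case: (s1 x == N1); case: (s2 x == N2).
Qed.
End Gen.

Lemma card_set_sumz (T : finType) (P : pred T) :
  (#|[set x | P x]|)%:Z = \sum_x (P x)%:R.
Proof.
rewrite -sum1_card big_mkcond /= -[LHS]intz sumMz.
by apply: eq_bigr => x _; rewrite inE; case: (P x).
Qed.

Lemma count2 (t n p q N1 N2 : nat) : n = (p + q)%N ->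
  (#|[set x : {ffun 'I_n -> 'I_t.+1} | (pre (fun k => val (x k)) p == N1)
        && (pre (fun k => val (x k)) n == N1 + N2)%N]|)%:Z = Gz t p N1 * Gz t q N2.
Proof.
move=> Hn; subst n; rewrite -genfun card_set_sumz; apply: eq_bigr => x _.
have E1 : pre (fun k => val (x k)) p = s1 x.
  rewrite /pre big_mkcond big_split_ord /= [X in (_ + X)%N]big1 ?addn0.
    by apply: eq_bigr => i _; rewrite ltn_ord.
  by move=> i _; rewrite ltnNge leq_addr.
have E2 : pre (fun k => val (x k)) (p + q) = (s1 x + s2 x)%N.
  by rewrite pre_ge // big_split_ord.
rewrite E1 E2; case: eqP => [->|] //=.
by rewrite eqn_add2l.
Qed.

End Part2.

Lemma sum_eq_shift (u s J : nat) :
  (\sum_(j < J) nat_of_bool (s == u + j))%N = nat_of_bool (u <= s < u + J)%N.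
Proof.
elim: J => [|J IH]; first by rewrite big_ord0; lia.
rewrite big_ord_recr /= IH; lia.
Qed.

Lemma iseq_card (R : realType) (a b c d t : nat) : (0 < t)%N ->
  i_seq R [:: a; b; c; d] t =
  #|[set x : {ffun 'I_(sumn [:: a; b; c; d]) -> 'I_t.+1} |
      (t * b <= pre (fun k => val (x k)) (a + b))%N &&
      (pre (fun k => val (x k)) (sumn [:: a; b; c; d]) == t * (b + d))%N]|.
Proof.
move=> Ht; rewrite /i_seq /i_schubert; apply: eq_card => x; rewrite !inE.
set S := set_of_seq _.
set n := sumn _.
have Hn : n = (a + b + c + d)%N by rewrite /n /=; lia.
have HS : forall k : 'I_n, (k \in S) = ((a <= k < a + b) || (a + b + c <= k))%N.
  move=> k; rewrite /S /set_of_seq inE nth_indicator //.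
  by rewrite -Hn.
have Hf : forall k, (val (x k) <= t)%N by move=> k; rewrite -ltnS ltn_ord.
have Cs := cond_spec Hn HS Hf.
apply/idP/idP.
  move/asboolP/charA/Cs => [H1 H2]; apply/andP; split => //; exact/eqP.
move/andP => [H1 /eqP H2]; apply/asboolP.
have [H3 H4] := proj2 Cs (conj H1 H2).
exact: charB.
Qed.

Lemma card_set_sum (T : finType) (P : pred T) :
  #|[set x | P x]| = (\sum_x nat_of_bool (P x))%N.
Proof.
rewrite -sum1_card big_mkcond /=.
by apply: eq_bigr => x _; rewrite inE; case: (P x).
Qed.

Lemma cond_split (t a b d s T : nat) : (s <= T)%N -> (s <= t * (a + b))%N ->
  nat_of_bool ((t * b <= s) && (T == t * (b + d)))%N =
  (\sum_(j < (t * minn a d).+1)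
      nat_of_bool ((s == t * b + j) && (T == (t * b + j) + (t * d - j))))%N.
Proof.
move=> H1 H2.
have Hbd : forall j : 'I_(t * minn a d).+1, (j <= t * a)%N /\ (j <= t * d)%N.
  move=> j; have := ltn_ord j; rewrite ltnS => Hj.
  by split; apply: (leq_trans Hj); rewrite leq_mul2l ?geq_minl ?geq_minr orbT.
have E1 : (t * (b + d) = t * b + t * d)%N by rewrite mulnDr.
have E2 : (t * (a + b) = t * a + t * b)%N by rewrite mulnDr.
have E3 : (t * minn a d = minn (t * a) (t * d))%N by rewrite minnMr.
case: (eqVneq T (t * b + t * d)%N) => HT.
  rewrite (eq_bigr (fun j : 'I__ => nat_of_bool (s == t * b + j)%N)); last first.
    move=> j _; have [Hj1 Hj2] := Hbd j.
    have -> : (T == t * b + j + (t * d - j))%N by apply/eqP; lia.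
    by rewrite andbT.
  rewrite sum_eq_shift; congr nat_of_bool; lia.
rewrite big1; last first.
  move=> j _; have [Hj1 Hj2] := Hbd j.
  have -> : (T == t * b + j + (t * d - j))%N = false by apply/eqP; lia.
  by rewrite andbF.
have -> : (T == t * (b + d))%N = false by apply/eqP; lia.
by rewrite andbF.
Qed.

Local Open Scope ring_scope.


Lemma iseq_sum (R : realType) (a b c d t : nat) : (0 < t)%N ->
  (i_seq R [:: a; b; c; d] t)%:Z =
  \sum_(j < (t * minn a d).+1) Gz t (a + b) (t * b + j)%N%:Z * Gz t (c + d) ((t * d)%:Z - j%:Z).
Proof.
move=> Ht; rewrite iseq_card //.
set n := sumn _.
have Hn : n = ((a + b) + (c + d))%N by rewrite /n /=; lia.
rewrite card_set_sum.
rewrite (eq_bigr (fun x : {ffun 'I_n -> 'I_t.+1} => (\sum_(j < (t * minn a d).+1)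
      nat_of_bool ((pre (fun k => val (x k)) (a + b) == t * b + j) &&
        (pre (fun k => val (x k)) n == (t * b + j) + (t * d - j))))%N)); last first.
  move=> x _; apply: cond_split.
    by apply: pre_mono; rewrite Hn leq_addr.
  have := pre_lip (F := fun k => val (x k)) (t := t) (m := 0%N) (m' := (a + b)%N).
  rewrite pre0 add0n subn0; apply => // k; rewrite -ltnS ltn_ord //.
rewrite (@exchange_big _ 0%N addn) /= -[LHS]intz sumMz; apply: eq_bigr => j _.
rewrite -card_set_sum intz (count2 _ _ _ Hn).
have Hj : (j <= t * d)%N.
  have := ltn_ord j; rewrite ltnS => /leq_trans; apply.
  by rewrite leq_mul2l geq_minr orbT.
by rewrite subzn.
Qed.

Theorem mainTheorem7 (R : realType) (a b c d t : nat) :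
  (0 < a)%N -> (0 < b)%N -> (0 < c)%N -> (0 < d)%N -> (0 < t)%N ->
  i_seq R [:: a; b; c; d] t = i_seq R [:: d; c; b; a] t /\
  ((i_seq R [:: a; b; c; d] t)%:Z =
     \sum_(0 <= j < (t * minn a d).+1) Ffun a b j%:Z t * Ffun c d (- j%:Z) t)%R.
Proof.
move=> Ha Hb Hc Hd Ht; split.
  apply/eqP; rewrite -eqz_nat; apply/eqP.
  rewrite !iseq_sum // minnC; apply: eq_bigr => j _.
  have Hj : (j <= t * minn a d)%N by have := ltn_ord j; rewrite ltnS => /leq_trans; apply; rewrite minnC.
  have Hja : (j <= t * a)%N.
    by apply: (leq_trans Hj); rewrite leq_mul2l geq_minl orbT.
  have Hjd : (j <= t * d)%N.
    by apply: (leq_trans Hj); rewrite leq_mul2l geq_minr orbT.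
  rewrite mulrC; congr (_ * _).
    rewrite [RHS]Gz_sym (addnC d c); congr Gz.
    rewrite mulnDr !PoszD; ring.
  rewrite [RHS]Gz_sym (addnC b a); congr Gz.
  rewrite mulnDr !PoszD; ring.
rewrite iseq_sum // big_mkord; apply: eq_bigr => j _.
rewrite !Ffun_HF.
have Hab : (0 < a + b)%N by lia.
have Hcd : (0 < c + d)%N by lia.
rewrite -(prednK Hab) -(prednK Hcd) -!Gz_HF.
by rewrite PoszD.
Qed.
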